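(* Let $A\bowtie^{\theta} I$ be an amalgamated Banach algebra as in the context and let $((a_\alpha,i_\alpha))_\alpha$ be a net in $A\bowtie^{\theta} I$. Then $((a_\alpha,i_\alpha))_\alpha$ is a left approximate identity for $A\bowtie^{\theta} I$ if and only if $(a_\alpha)_\alpha$ is a left approximate identity for $A$, $(\theta(a_\alpha)+i_\alpha)_\alpha$ is a left approximate identity for the algebra $\theta(A)+I$, and $i_\alpha\theta(a)\to 0$ in norm for every $a\in A$. Moreover, the same equivalence holds with ''left approximate identity'' replaced by ''bounded left approximate identity'' throughout.
   Context: Let $A$ and $B$ be Banach algebras, $\theta:A\to B$ a continuous algebra homomorphism with $\|\theta\|\le 1$, and $I$ a closed two-sided ideal of $B$. The amalgamated Banach algebra $A\bowtie^{\theta} I$ is the Banach space $\{(a,i): a\in A,\ i\in I\}$ with norm $\|(a,i)\|=\|a\|+\|i\|$ and product $(a,i)\cdot(a',i')=(aa',\ \theta(a)i'+i\theta(a')+ii')$. Here $\theta(A)+I=\{\theta(a)+j: a\in A, j\in I\}$, a subalgebra of $B$ with the norm of $B$. A net $(e_\alpha)$ in a normed algebra $C$ is a left approximate identity if $e_\alpha c\to c$ for all $c\in C$. *)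

(* Defs.v *)
From HB Require Import structures.
From mathcomp Require Import all_boot all_order all_algebra.
Set Implicit Arguments. Unset Strict Implicit. Unset Printing Implicit Defensive.
Import Order.TTheory GRing.Theory Num.Theory.
Local Open Scope ring_scope.

Record directed_set (D : Type) (le : D -> D -> Prop) : Prop := {
  ds_inhabited : inhabited D;
  ds_refl : forall d, le d d;
  ds_trans : forall a b c, le a b -> le b c -> le a c;
  ds_upper : forall a b, exists c, le a c /\ le b c }.

Definition seq_cauchy (K : numFieldType) (V : zmodType) (n : V -> K)
  (u : nat -> V) : Prop :=
  forall eps : K, 0 < eps -> exists N : nat,
    forall p q : nat, (N <= p)%N -> (N <= q)%N -> n (u p - u q) < eps.

Definition seq_conv (K : numFieldType) (V : zmodType) (n : V -> K)
  (u : nat -> V) (l : V) : Prop :=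
  forall eps : K, 0 < eps -> exists N : nat,
    forall p : nat, (N <= p)%N -> n (u p - l) < eps.

Definition net_conv (K : numFieldType) (V : zmodType) (n : V -> K)
  (D : Type) (le : D -> D -> Prop) (x : D -> V) (l : V) : Prop :=
  forall eps : K, 0 < eps -> exists d0 : D,
    forall d : D, le d0 d -> n (x d - l) < eps.

Record banach_algebra (K : numFieldType) (A : lmodType K)
  (mul : A -> A -> A) (nrm : A -> K) : Prop := {
  ba_mulA : forall x y z, mul x (mul y z) = mul (mul x y) z;
  ba_mulDl : forall x y z, mul (x + y) z = mul x z + mul y z;
  ba_mulDr : forall x y z, mul x (y + z) = mul x y + mul x z;
  ba_mulZl : forall (k : K) x y, mul (k *: x) y = k *: mul x y;
  ba_mulZr : forall (k : K) x y, mul x (k *: y) = k *: mul x y;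
  ba_norm_ge0 : forall x, 0 <= nrm x;
  ba_norm_eq0 : forall x, nrm x = 0 -> x = 0;
  ba_normD : forall x y, nrm (x + y) <= nrm x + nrm y;
  ba_normZ : forall (k : K) x, nrm (k *: x) = `|k| * nrm x;
  ba_normM : forall x y, nrm (mul x y) <= nrm x * nrm y;
  ba_complete : forall u : nat -> A, seq_cauchy nrm u ->
                  exists l, seq_conv nrm u l }.

Record alg_hom (K : numFieldType) (A B : lmodType K)
  (mulA : A -> A -> A) (mulB : B -> B -> B) (theta : A -> B) : Prop := {
  ah_add : forall x y, theta (x + y) = theta x + theta y;
  ah_scale : forall (k : K) x, theta (k *: x) = k *: theta x;
  ah_mul : forall x y, theta (mulA x y) = mulB (theta x) (theta y) }.

Record closed_ideal (K : numFieldType) (B : lmodType K)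
  (mulB : B -> B -> B) (nB : B -> K) (I : B -> Prop) : Prop := {
  ci_0 : I 0;
  ci_add : forall x y, I x -> I y -> I (x + y);
  ci_scale : forall (k : K) x, I x -> I (k *: x);
  ci_mull : forall b x, I x -> I (mulB b x);
  ci_mulr : forall b x, I x -> I (mulB x b);
  ci_closed : forall (u : nat -> B) l, (forall p, I (u p)) ->
                seq_conv nB u l -> I l }.

(* Left approximate identity (e_d) for the normed algebra whose carrier is
   the set P inside V, with multiplication mul and norm n. *)
Definition left_approx_identity (K : numFieldType) (V : zmodType)
  (P : V -> Prop) (mul : V -> V -> V) (n : V -> K)
  (D : Type) (le : D -> D -> Prop) (e : D -> V) : Prop :=
  (forall d, P (e d)) /\
  (forall c, P c -> net_conv n le (fun d => mul (e d) c) c).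

Definition bounded_left_approx_identity (K : numFieldType) (V : zmodType)
  (P : V -> Prop) (mul : V -> V -> V) (n : V -> K)
  (D : Type) (le : D -> D -> Prop) (e : D -> V) : Prop :=
  left_approx_identity P mul n le e /\ exists M : K, forall d, n (e d) <= M.

(* The amalgamated algebra A ⋈^theta I, carried by pairs (a, i) in A * B
   with i in I. *)
Definition amal_carrier (A B : Type) (I : B -> Prop) (p : A * B) : Prop :=
  I p.2.

Definition amal_mul (K : numFieldType) (A B : lmodType K)
  (mulA : A -> A -> A) (mulB : B -> B -> B) (theta : A -> B)
  (p q : A * B) : A * B :=
  (mulA p.1 q.1,
   mulB (theta p.1) q.2 + mulB p.2 (theta q.1) + mulB p.2 q.2).

Definition amal_norm (K : numFieldType) (A B : lmodType K)
  (nA : A -> K) (nB : B -> K) (p : A * B) : K := nA p.1 + nB p.2.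

Definition thetaA_plus_I (K : numFieldType) (A B : lmodType K)
  (theta : A -> B) (I : B -> Prop) (b : B) : Prop :=
  exists a j, I j /\ b = theta a + j.

(* Main.v *)
Require Import Defs.
From HB Require Import structures.
From mathcomp Require Import all_boot all_order all_algebra.
Import Order.TTheory GRing.Theory Num.Theory.
Local Open Scope ring_scope.

Definition small (K : numFieldType) (D : Type) (le : D -> D -> Prop)
  (f : D -> K) : Prop :=
  forall eps : K, 0 < eps -> exists d0 : D, forall d : D, le d0 d -> f d < eps.
Arguments small {K D} le f.

Lemma small_le (K : numFieldType) (D : Type) (le : D -> D -> Prop)
  (f g : D -> K) : (forall d, f d <= g d) -> small le g -> small le f.
Proof.
move=> fg hg eps e0; have [d0 Hd] := hg eps e0; exists d0 => d /Hd.
exact: le_lt_trans.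
Qed.

Lemma small_add (K : numFieldType) (D : Type) (le : D -> D -> Prop)
  (hD : directed_set le) (f g : D -> K) :
  small le f -> small le g -> small le (fun d => f d + g d).
Proof.
move=> hf hg eps e0.
have e2 : 0 < eps / 2 by rewrite divr_gt0 // ltr0n.
have [d1 H1] := hf _ e2; have [d2 H2] := hg _ e2.
have [c [c1 c2]] := ds_upper hD d1 d2.
exists c => d cd; rewrite [eps]splitr; apply: ltrD.
  by apply: H1; apply: ds_trans hD _ _ _ c1 cd.
by apply: H2; apply: ds_trans hD _ _ _ c2 cd.
Qed.

Lemma conv_le (K : numFieldType) (V W : zmodType) (n : V -> K) (m : W -> K)
  (D : Type) (le : D -> D -> Prop) (x : D -> V) (l : V) (y : D -> W) (l' : W) :
  (forall d, n (x d - l) <= m (y d - l')) -> net_conv m le y l' -> net_conv n le x l.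
Proof. move=> h hy; exact: (@small_le K D le _ _ h hy). Qed.

Arguments conv_le {K V W n m D le x l y l'}.
Arguments small_le {K D le f g}.
Arguments small_add {K D le} hD {f g}.

Lemma rearr1 (V : zmodType) (x1 x2 x3 x4 t j : V) :
  x1 + x2 + (x3 + x4) - (t + j) = x1 - t + (x2 + x3 + x4 - j).
Proof.
rewrite opprD !addrA; congr (_ + _).
by rewrite (addrAC _ x4 (-t)) (addrAC _ x3 (-t)) (addrAC _ x2 (-t)).
Qed.
Lemma rearr2 (V : zmodType) (x2 x3 x4 j : V) :
  x2 + x3 + x4 - j = (x2 + x4 - j) + (x3 - 0).
Proof.
by rewrite subr0 (addrAC _ x3 x4) (addrAC _ x3 (-j)).
Qed.

Theorem proposition2p1
  (K : numFieldType) (A B : lmodType K)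
  (mulA : A -> A -> A) (nA : A -> K) (mulB : B -> B -> B) (nB : B -> K)
  (hA : banach_algebra mulA nA) (hB : banach_algebra mulB nB)
  (theta : A -> B) (htheta : alg_hom mulA mulB theta)
  (htheta_norm : forall a, nB (theta a) <= nA a)
  (I : B -> Prop) (hI : closed_ideal mulB nB I)
  (D : Type) (le : D -> D -> Prop) (hD : directed_set le)
  (a_ : D -> A) (i_ : D -> B) (hi : forall d, I (i_ d)) :
  (left_approx_identity (amal_carrier (A:=A) I) (amal_mul mulA mulB theta)
     (amal_norm nA nB) le (fun d => (a_ d, i_ d))
   <->
   [/\ left_approx_identity (fun _ : A => True) mulA nA le a_,
       left_approx_identity (thetaA_plus_I theta I) mulB nB le
         (fun d => theta (a_ d) + i_ d)
     & forall a : A, net_conv nB le (fun d => mulB (i_ d) (theta a)) 0])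
  /\
  (bounded_left_approx_identity (amal_carrier (A:=A) I)
     (amal_mul mulA mulB theta) (amal_norm nA nB) le (fun d => (a_ d, i_ d))
   <->
   [/\ bounded_left_approx_identity (fun _ : A => True) mulA nA le a_,
       bounded_left_approx_identity (thetaA_plus_I theta I) mulB nB le
         (fun d => theta (a_ d) + i_ d)
     & forall a : A, net_conv nB le (fun d => mulB (i_ d) (theta a)) 0]).
Proof.
have nB0 := ba_norm_ge0 hB. have nA0 := ba_norm_ge0 hA.
have mulB0 : forall x, mulB x 0 = 0.
  by move=> x; have := ba_mulZr hB 0 x 0; rewrite !scale0r.
have th0 : theta 0 = 0 by have := ah_scale htheta 0 0; rewrite !scale0r.
have thB : forall x y, theta (x - y) = theta x - theta y.
  move=> x y; rewrite (ah_add htheta); congr (_ + _).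
  by have := ah_scale htheta (-1) y; rewrite !scaleN1r.
have nBN : forall x, nB (- x) = nB x.
  by move=> x; rewrite -scaleN1r (ba_normZ hB) normrN1 mul1r.
have fwd : left_approx_identity (amal_carrier (A:=A) I) (amal_mul mulA mulB theta)
     (amal_norm nA nB) le (fun d => (a_ d, i_ d)) ->
   [/\ left_approx_identity (fun _ : A => True) mulA nA le a_,
       left_approx_identity (thetaA_plus_I theta I) mulB nB le
         (fun d => theta (a_ d) + i_ d)
     & forall a : A, net_conv nB le (fun d => mulB (i_ d) (theta a)) 0].
  move=> [_ H].
  have Hi : forall a, net_conv nB le (fun d => mulB (i_ d) (theta a)) 0.
    move=> a; apply: (conv_le _ (H (a, 0) (ci_0 hI))) => d /=.
    by rewrite /amal_norm /= !mulB0 add0r !addr0 lerDr.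
  split=> //.
    split => // c _; apply: (conv_le _ (H (c,0) (ci_0 hI))) => d /=.
    by rewrite /amal_norm /= lerDl.
  split.
    by move=> d; exists (a_ d), (i_ d); split.
  move=> c [a [j [Ij ->]]]; apply: (conv_le _ (H (a,j) Ij)) => d /=.
  rewrite /amal_norm /= (ba_mulDl hB) !(ba_mulDr hB) -(ah_mul htheta) rearr1 -thB.
  apply: (le_trans (ba_normD hB _ _)); apply: lerD => //.
have bwd : [/\ left_approx_identity (fun _ : A => True) mulA nA le a_,
       left_approx_identity (thetaA_plus_I theta I) mulB nB le
         (fun d => theta (a_ d) + i_ d)
     & forall a : A, net_conv nB le (fun d => mulB (i_ d) (theta a)) 0] ->
   left_approx_identity (amal_carrier (A:=A) I) (amal_mul mulA mulB theta)
     (amal_norm nA nB) le (fun d => (a_ d, i_ d)).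
  move=> [[_ Ha] [_ Hc] Hi]; split; first by move=> d; exact: hi.
  move=> [a j] /= Ij.
  have H1 := Ha a Logic.I.
  have H2 := Hc j (ex_intro _ 0 (ex_intro _ j (conj Ij (esym (etrans (f_equal (fun z => z + j) th0) (add0r j)))))).
  have H3 := Hi a.
  apply: (small_le (g := fun d => nA (mulA (a_ d) a - a) +
      (nB (mulB (theta (a_ d) + i_ d) j - j) + nB (mulB (i_ d) (theta a) - 0)))).
    move=> d; rewrite /amal_norm /= lerD2l (ba_mulDl hB) rearr2; exact: (ba_normD hB).
  exact: (small_add hD (f := fun d => nA (mulA (a_ d) a - a)) H1
    (small_add hD (f := fun d => nB (mulB (theta (a_ d) + i_ d) j - j))
       (g := fun d => nB (mulB (i_ d) (theta a) - 0)) H2 H3)).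
split; first by split.
split.
  move=> [L [M HM]]; have [h1 h2 h3] := fwd L; split => //.
    split=> //; exists M => d; apply: le_trans (HM d); rewrite /amal_norm /=.
    by rewrite lerDl.
  split=> //; exists M => d; apply: le_trans (HM d); rewrite /amal_norm /=.
  apply: (le_trans (ba_normD hB _ _)); exact: lerD.
move=> [[L1 [M1 HM1]] [L2 [M2 HM2]] h3]; split; first exact: bwd.
exists (M1 + M2 + M1) => d; rewrite /amal_norm /= -addrA; apply: lerD => //.
have -> : i_ d = (theta (a_ d) + i_ d) - theta (a_ d) by rewrite [RHS]addrC addKr.
apply: (le_trans (ba_normD hB _ _)); apply: lerD => //.
rewrite nBN; exact: le_trans (htheta_norm _) (HM1 d).
Qed.
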